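(* Let $f$ be as in the standing setting and suppose $f$ satisfies quadratic functional growth with constant $\kappa_f>0$: $$f(x)-f^*\ge\frac{\kappa_f}{2}\|x-\bar x\|^2\qquad\forall x\in X.$$ Let $\mu_f=\kappa_f/L_f$. Then $f$ satisfies the global error bound $$\|g(x)\|\ge\frac{\kappa_f}{1+\mu_f+\sqrt{1+\mu_f}}\,\|x-\bar x\|\qquad\forall x\in X.$$
   Context: Standing setting: $X\subseteq\mathbb{R}^n$ is a nonempty closed convex set; $f:X\to\mathbb{R}$ is convex and continuously differentiable, with $L_f$-Lipschitz continuous gradient on $X$ ($L_f>0$). Consider $f^*=\min_{x\in X}f(x)$ with optimal set $X^*$ nonempty and closed and $f^*$ finite. $\|\cdot\|$ is the Euclidean norm, $[u]_S$ is the Euclidean projection onto a closed convex set $S$, and $\bar x=[x]_{X^*}$. The gradient mapping is $g(x)=L_f\big(x-x^+\big)$ with $x^+=[x-\frac1{L_f}\nabla f(x)]_X$. *)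

(* Defs.v *)
From Stdlib Require Import Reals.
From mathcomp Require Import ssreflect ssrfun ssrbool eqtype ssrnat seq fintype bigop.

Set Implicit Arguments.
Unset Strict Implicit.

Local Open Scope R_scope.

Definition vec (n : nat) := 'I_n -> R.

Definition vadd {n} (x y : vec n) : vec n := fun i => x i + y i.
Definition vsub {n} (x y : vec n) : vec n := fun i => x i - y i.
Definition vscale {n} (a : R) (x : vec n) : vec n := fun i => a * x i.

Definition dot {n} (x y : vec n) : R := \big[Rplus/0]_(i < n) (x i * y i).
Definition vnorm {n} (x : vec n) : R := sqrt (dot x x).

Definition closed_vset {n} (S : vec n -> Prop) : Prop :=
  forall x, (forall eps, 0 < eps -> exists y, S y /\ vnorm (vsub x y) < eps) -> S x.

Definition convex_vset {n} (S : vec n -> Prop) : Prop :=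
  forall x y t, S x -> S y -> 0 <= t <= 1 ->
    S (vadd (vscale t x) (vscale (1 - t) y)).

Definition is_proj {n} (S : vec n -> Prop) (x p : vec n) : Prop :=
  S p /\ forall y, S y -> vnorm (vsub x p) <= vnorm (vsub x y).

Definition convex_on {n} (X : vec n -> Prop) (f : vec n -> R) : Prop :=
  forall x y t, X x -> X y -> 0 <= t <= 1 ->
    f (vadd (vscale t x) (vscale (1 - t) y)) <= t * f x + (1 - t) * f y.

Definition has_gradient {n} (f : vec n -> R) (x gx : vec n) : Prop :=
  forall eps, 0 < eps -> exists delta, 0 < delta /\
    forall y, vnorm (vsub y x) < delta ->
      Rabs (f y - f x - dot gx (vsub y x)) <= eps * vnorm (vsub y x).

Definition continuous_on_vec {n} (X : vec n -> Prop) (g : vec n -> vec n) : Prop :=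
  forall x, X x -> forall eps, 0 < eps -> exists delta, 0 < delta /\
    forall y, X y -> vnorm (vsub y x) < delta -> vnorm (vsub (g y) (g x)) < eps.

Definition lipschitz_on_vec {n} (X : vec n -> Prop) (g : vec n -> vec n) (L : R) : Prop :=
  forall x y, X x -> X y -> vnorm (vsub (g x) (g y)) <= L * vnorm (vsub x y).

Definition optset {n} (X : vec n -> Prop) (f : vec n -> R) (fstar : R) : vec n -> Prop :=
  fun x => X x /\ f x = fstar.

(* Main.v *)
Require Import Defs.
From Stdlib Require Import Reals Lra Lia Psatz Classical ClassicalEpsilon FunctionalExtensionality.
From HB Require Import structures.
From mathcomp Require Import ssreflect ssrfun ssrbool eqtype ssrnat seq fintype bigop.
Local Open Scope R_scope.
Set Implicit Arguments.
Unset Strict Implicit.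

HB.instance Definition _ := Monoid.isComLaw.Build R 0 Rplus (fun a b c => esym (Rplus_assoc a b c)) Rplus_comm Rplus_0_l.

Ltac hb := repeat match goal with
 | |- context [@bigop.body ?R ?I ?idx ?r ?F] => let s := fresh "s" in set s := @bigop.body R I idx r F in *
 | H : context [@bigop.body ?R ?I ?idx ?r ?F] |- _ => let s := fresh "s" in set s := @bigop.body R I idx r F in *
 end.

Lemma sum_ge0 n (F : 'I_n -> R) : (forall i, 0 <= F i) -> 0 <= \big[Rplus/0]_(i < n) F i.
Proof. move=> H. apply: (big_ind (fun x => 0 <= x)) => //; [lra| move=> a b; lra]. Qed.

Lemma sum_scale n (a : R) (F : 'I_n -> R) :
  \big[Rplus/0]_(i < n) (a * F i) = a * \big[Rplus/0]_(i < n) F i.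
Proof.
elim: n F => [|n IH] F; first by rewrite !big_ord0; ring.
rewrite !big_ord_recr /= IH Rmult_plus_distr_l //.
Qed.

Lemma sum_ext n (F G : 'I_n -> R) : (forall i, F i = G i) ->
  \big[Rplus/0]_(i < n) F i = \big[Rplus/0]_(i < n) G i.
Proof. move=> H; apply: eq_bigr => i _; apply H. Qed.

Lemma sum_term n (F : 'I_n -> R) i : (forall j, 0 <= F j) -> F i <= \big[Rplus/0]_(j < n) F j.
Proof.
move=> H; rewrite (bigD1 i) //=.
have : 0 <= \big[Rplus/0]_(j < n | j != i) F j.
  apply: (big_ind (fun x => 0 <= x)); [lra| move=> a b; lra| move=> j _; apply H].
move=> Hs. apply: Rle_trans (Rplus_le_compat_l (F i) _ _ Hs). rewrite Rplus_0_r; apply Rle_refl.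
Qed.


Lemma dot_sym n (x y : vec n) : dot x y = dot y x.
Proof. apply: sum_ext => i; ring. Qed.

Lemma dot_addl n (x y z : vec n) : dot (vadd x y) z = dot x z + dot y z.
Proof. rewrite /dot -big_split /=; apply: sum_ext => i; rewrite /vadd; ring. Qed.
Lemma dot_subl n (x y z : vec n) : dot (vsub x y) z = dot x z - dot y z.
Proof.
rewrite /dot.
have -> : \big[Rplus/0]_(i < n) (x i * z i) = \big[Rplus/0]_(i < n) (vsub x y i * z i + y i * z i).
  apply: sum_ext => i; rewrite /vsub; ring.
rewrite big_split /=; ring.
Qed.
Lemma dot_scalel n a (x z : vec n) : dot (vscale a x) z = a * dot x z.
Proof. rewrite /dot -sum_scale; apply: sum_ext => i; rewrite /vscale; ring. Qed.
Lemma dot_addr n (x y z : vec n) : dot z (vadd x y) = dot z x + dot z y.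
Proof. by rewrite dot_sym dot_addl !(dot_sym z). Qed.
Lemma dot_subr n (x y z : vec n) : dot z (vsub x y) = dot z x - dot z y.
Proof. by rewrite dot_sym dot_subl !(dot_sym z). Qed.
Lemma dot_scaler n a (x z : vec n) : dot z (vscale a x) = a * dot z x.
Proof. by rewrite dot_sym dot_scalel (dot_sym z). Qed.

Lemma dot_ge0 n (x : vec n) : 0 <= dot x x.
Proof. apply: sum_ge0 => i; nra. Qed.

Lemma vnorm_ge0 n (x : vec n) : 0 <= vnorm x.
Proof. apply: sqrt_pos. Qed.

Lemma vnorm_sq n (x : vec n) : vnorm x * vnorm x = dot x x.
Proof. rewrite /vnorm sqrt_sqrt //; apply dot_ge0. Qed.

Lemma vnorm_le n (x : vec n) c : 0 <= c -> dot x x <= c * c -> vnorm x <= c.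
Proof.
move=> Hc H. rewrite /vnorm. rewrite -(sqrt_square c) //. apply: sqrt_le_1_alt. done.
Qed.

Lemma vnorm_lt n (x : vec n) c : 0 <= c -> dot x x < c * c -> vnorm x < c.
Proof.
move=> Hc H. rewrite /vnorm. rewrite -(sqrt_square c) //. apply: sqrt_lt_1_alt. split=> //; apply dot_ge0.
Qed.

Lemma vnorm_scale n a (x : vec n) : 0 <= a -> vnorm (vscale a x) = a * vnorm x.
Proof.
move=> Ha. rewrite /vnorm dot_scalel dot_scaler -Rmult_assoc sqrt_mult; [|nra|apply dot_ge0].
rewrite sqrt_square //.
Qed.

Lemma CS n (x y : vec n) : dot x y <= vnorm x * vnorm y.
Proof.
set A := dot y y. set B := dot x y. set C := dot x x.
have Q : forall t, 0 <= C - 2 * t * B + t * t * A.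
  move=> t. have := dot_ge0 (vsub x (vscale t y)).
  rewrite !dot_subl !dot_subr !dot_scalel !dot_scaler (dot_sym y x) -/A -/B -/C. nra.
have HB2 : B * B <= A * C.
  have HA := dot_ge0 y. rewrite -/A in HA.
  case: (Rle_lt_or_eq_dec 0 A HA) => HA'.
  - have := Q (B / A). have -> : C - 2 * (B / A) * B + B / A * (B / A) * A = C - B * B / A by field; lra.
    move=> H. have E : B * B = (B * B / A) * A by field; lra.
    rewrite E. have : B * B / A <= C by lra. nra.
  - rewrite -HA'. case: (Req_dec B 0) => HB0.
    + rewrite HB0; lra.
    + have := Q ((C + 1) / (2 * B)). rewrite -HA'.
      have -> : C - 2 * ((C + 1) / (2 * B)) * B + (C + 1) / (2 * B) * ((C + 1) / (2 * B)) * 0 = -1 by field.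
      lra.
have H1 : B <= Rabs B by apply Rle_abs.
have H2 : Rabs B <= vnorm x * vnorm y.
  rewrite /vnorm -sqrt_mult; [|apply dot_ge0|apply dot_ge0].
  rewrite -sqrt_Rsqr_abs. apply sqrt_le_1_alt. rewrite /Rsqr. rewrite -/C -/A. lra.
lra.
Qed.

Lemma vnorm_sub_sym n (x y : vec n) : vnorm (vsub x y) = vnorm (vsub y x).
Proof. rewrite /vnorm; f_equal; rewrite !dot_subl !dot_subr (dot_sym x y); ring. Qed.

Lemma vnorm_add n (x y : vec n) : vnorm (vadd x y) <= vnorm x + vnorm y.
Proof.
apply: vnorm_le. have := vnorm_ge0 x; have := vnorm_ge0 y; lra.
rewrite !dot_addl !dot_addr (dot_sym y x) -!vnorm_sq. have := CS x y. nra.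
Qed.

Lemma vnorm_tri n (x y z : vec n) : vnorm (vsub x z) <= vnorm (vsub x y) + vnorm (vsub y z).
Proof.
have -> : vsub x z = vadd (vsub x y) (vsub y z).
  apply functional_extensionality => i; rewrite /vsub /vadd; ring.
apply vnorm_add.
Qed.

Definition seg n (t : R) (y x : vec n) : vec n := vadd (vscale t y) (vscale (1 - t) x).

Lemma seg_sub n t (y x : vec n) : vsub (seg t y x) x = vscale t (vsub y x).
Proof. apply functional_extensionality => i; rewrite /seg /vsub /vadd /vscale; ring. Qed.
Lemma seg_sub2 n s t (y x : vec n) : vsub (seg s y x) (seg t y x) = vscale (s - t) (vsub y x).
Proof. apply functional_extensionality => i; rewrite /seg /vsub /vadd /vscale; ring. Qed.
Lemma seg0 n (y x : vec n) : seg 0 y x = x.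
Proof. apply functional_extensionality => i; rewrite /seg /vsub /vadd /vscale; ring. Qed.
Lemma seg1 n (y x : vec n) : seg 1 y x = y.
Proof. apply functional_extensionality => i; rewrite /seg /vsub /vadd /vscale; ring. Qed.

Lemma grad_ineq n (X : vec n -> Prop) f g (x y : vec n) :
  convex_on X f -> has_gradient f x g -> X x -> X y ->
  f x + dot g (vsub y x) <= f y.
Proof.
move=> Hf Hg Hx Hy.
case: (Rle_or_lt (f x + dot g (vsub y x)) (f y)) => // Hlt.
exfalso.
set d := vsub y x in Hlt *.
set eta := f x + dot g d - f y.
have Heta : 0 < eta by rewrite /eta; lra.
set N := vnorm d.
have HN : 0 <= N by apply vnorm_ge0.
set eps := eta / (2 * (N + 1)).
have Heps : 0 < eps by rewrite /eps; apply Rdiv_lt_0_compat; lra.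
have HepsN : eps * (N + 1) = eta / 2 by rewrite /eps; field; lra.
have [del [Hdel H]] := Hg eps Heps.
set t := Rmin 1 (del / (2 * (N + 1))).
have Ht1 : t <= 1 by apply Rmin_l.
have Ht2 : t <= del / (2 * (N + 1)) by apply Rmin_r.
have Ht0 : 0 < t.
  rewrite /t; apply Rmin_glb_lt; [lra|apply Rdiv_lt_0_compat; lra].
have HtN : t * (N + 1) <= del / 2.
  have -> : del / 2 = del / (2 * (N + 1)) * (N + 1) by field; lra.
  apply Rmult_le_compat_r; lra.
have Hz := H (seg t y x).
rewrite seg_sub -/d vnorm_scale in Hz; last lra.
rewrite -/N dot_scaler in Hz.
have Hz2 := Hz ltac:(nra).
have Hc := Hf y x t Hy Hx ltac:(lra).
rewrite -/(seg t y x) in Hc.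
have Ha : - (f (seg t y x) - f x - t * dot g d) <= eps * (t * N).
  eapply Rle_trans; [|exact Hz2]; rewrite -Rabs_Ropp; apply Rle_abs.
(* t * dot g d - eps*t*N <= f z - f x <= t (f y - f x) *)
have : t * (dot g d - eps * N - (f y - f x)) <= 0.
  nra.
move=> H3.
have H4 : dot g d - eps * N - (f y - f x) <= 0.
  case: (Rle_or_lt (dot g d - eps * N - (f y - f x)) 0) => // H5. nra.
have : eps * N <= eta / 2 by nra.
rewrite /eta in H4 *. lra.
Qed.

Lemma proj_vi n (S : vec n -> Prop) (x p y : vec n) :
  convex_vset S -> is_proj S x p -> S y -> dot (vsub x p) (vsub y p) <= 0.
Proof.
move=> HS [Hp Hmin] Hy.
set u := vsub x p. set w := vsub y p. set c := dot u w.
case: (Rle_or_lt c 0) => // Hc. exfalso.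
set B := dot w w.
have HB : 0 <= B by apply dot_ge0.
set t := Rmin 1 (c / (B + 1)).
have Ht1 : t <= 1 by apply Rmin_l.
have Ht2 : t <= c / (B + 1) by apply Rmin_r.
have Ht0 : 0 < t.
  rewrite /t; apply Rmin_glb_lt; [lra|apply Rdiv_lt_0_compat; lra].
have HtB : t * (B + 1) <= c.
  have -> : c = c / (B + 1) * (B + 1) by field; lra.
  apply Rmult_le_compat_r; lra.
have Hz : S (seg t y p) by apply HS => //; lra.
have Hm := Hmin _ Hz.
have E : vsub x (seg t y p) = vsub u (vscale t w).
  apply functional_extensionality => i; rewrite /u /w /seg /vsub /vadd /vscale; ring.
rewrite E -/u in Hm. clearbody u w.
have Hm2 : dot u u <= dot (vsub u (vscale t w)) (vsub u (vscale t w)).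
  rewrite -!vnorm_sq. have := vnorm_ge0 u. nra.
rewrite !dot_subl !dot_subr !dot_scalel !dot_scaler ?(dot_sym w u) -/c -/B in Hm2.
nra.
Qed.

Lemma Rdiv_le_0_compat a b : 0 <= a -> 0 < b -> 0 <= a / b.
Proof. move=> Ha Hb; rewrite /Rdiv; apply Rmult_le_pos => //; left; apply Rinv_0_lt_compat => //. Qed.

Lemma descent n (X : vec n -> Prop) f grad L (x y : vec n) :
  convex_vset X -> convex_on X f -> (forall z, X z -> has_gradient f z (grad z)) ->
  0 < L -> lipschitz_on_vec X grad L -> X x -> X y ->
  f y <= f x + dot (grad x) (vsub y x) + L / 2 * dot (vsub y x) (vsub y x).
Proof.
move=> HX Hf Hg HL Hlip Hx Hy.
set d := vsub y x. set g := grad x. set D := dot d d.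
have HD : 0 <= D by apply dot_ge0.
set A := f y - f x - dot g d.
have main : forall N : nat, (0 < N)%nat -> A <= L * D * (INR N + 1) / (2 * INR N).
  move=> N HN.
  have HNr : 0 < INR N by apply lt_0_INR; apply/ltP.
  set p := fun m : nat => seg (INR m / INR N) y x.
  have HpX : forall m, (m <= N)%nat -> X (p m).
    move=> m Hm. apply HX => //. split.
    - apply Rdiv_le_0_compat => //; apply pos_INR.
    - have : INR m <= INR N by apply le_INR; apply/leP.
      move=> H. apply (Rmult_le_reg_r (INR N)) => //.
      rewrite /Rdiv Rmult_assoc Rinv_l; lra.
  have claim : forall m, (m <= N)%nat ->
      f (p m) - f x - INR m / INR N * dot g d <= L * D * (INR m * (INR m + 1)) / (2 * INR N * INR N).
    elim=> [|m IH] Hm.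
    - rewrite /p /= /Rdiv Rmult_0_l seg0. have -> : L * D * (0 * (0 + 1)) * / (2 * INR N * INR N) = 0 by ring. lra.
    - have Hm' : (m <= N)%nat by apply: leq_trans Hm; apply leqnSn.
      have IH' := IH Hm'.
      have Hgi := grad_ineq Hf (Hg _ (HpX _ Hm)) (HpX _ Hm) (HpX _ Hm').
      rewrite /p seg_sub2 in Hgi.
      rewrite -/(p m) -/(p m.+1) S_INR in Hgi *.
      have E1 : INR m / INR N - (INR m + 1) / INR N = - / INR N by field; lra.
      rewrite E1 dot_scaler -/d in Hgi.
      have Hb : dot (grad (p m.+1)) d <= dot g d + L * ((INR m + 1) / INR N) * D.
        have -> : dot (grad (p m.+1)) d = dot g d + dot (vsub (grad (p m.+1)) g) d.
          rewrite dot_subl; ring.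
        have H1 := CS (vsub (grad (p m.+1)) g) d.
        have H2 := Hlip _ _ (HpX _ Hm) Hx.
        rewrite /p seg_sub -/d vnorm_scale in H2; last first.
          apply Rdiv_le_0_compat; [apply pos_INR| lra].
        rewrite -/(p m.+1) S_INR -/g in H2.
        have H3 := vnorm_ge0 (vsub (grad (p m.+1)) g).
        have H4 := vnorm_ge0 d.
        have H5 : 0 <= (INR m + 1) / INR N by apply Rdiv_le_0_compat; [have := pos_INR m; lra| lra].
        have H6 : vnorm d * vnorm d = D by apply vnorm_sq.
        have H7 : vnorm (vsub (grad (p m.+1)) g) * vnorm d <= L * ((INR m + 1) / INR N * vnorm d) * vnorm d.
          apply Rmult_le_compat_r => //.
        have -> : L * ((INR m + 1) / INR N) * D = L * ((INR m + 1) / INR N * vnorm d) * vnorm d by rewrite -H6; ring.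
        lra.
      have Hinv : 0 < / INR N by apply Rinv_0_lt_compat.
      have Hb2 : / INR N * dot (grad (p m.+1)) d <= / INR N * (dot g d + L * ((INR m + 1) / INR N) * D).
        apply Rmult_le_compat_l; lra.
      have E2 : L * D * ((INR m + 1) * (INR m + 1 + 1)) / (2 * INR N * INR N) =
                L * D * (INR m * (INR m + 1)) / (2 * INR N * INR N) + / INR N * (L * ((INR m + 1) / INR N) * D) by field; lra.
      have E3 : (INR m + 1) / INR N * dot g d = INR m / INR N * dot g d + / INR N * dot g d by field; lra.
      rewrite E2 E3. rewrite Rmult_plus_distr_l in Hb2. lra.
  have := claim N (leqnn N).
  rewrite /p /Rdiv Rinv_r; last lra. rewrite seg1 -/A Rmult_1_l.
  have -> : L * D * (INR N * (INR N + 1)) * / (2 * INR N * INR N) = L * D * (INR N + 1) * / (2 * INR N) by field; lra.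
  done.
case: (Rle_or_lt A (L / 2 * D)) => HA; first by rewrite /A in HA; lra.
exfalso.
set e := (A - L / 2 * D) / (L / 2 * D + 1).
have He : 0 < e by apply Rdiv_lt_0_compat; nra.
have [N [HN1 HN2]] := archimed_cor1 e He.
have HNr : 0 < INR N by apply lt_0_INR.
have := main N (introT ltP HN2).
have -> : L * D * (INR N + 1) / (2 * INR N) = L / 2 * D + (L / 2 * D) * / INR N by field; lra.
have : (L / 2 * D) * / INR N <= (L / 2 * D + 1) * / INR N.
  apply Rmult_le_compat_r; [apply Rlt_le, Rinv_0_lt_compat|]; lra.
have : (L / 2 * D + 1) * / INR N < (L / 2 * D + 1) * e by apply Rmult_lt_compat_l; nra.
have -> : (L / 2 * D + 1) * e = A - L / 2 * D by rewrite /e; field; nra.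
lra.
Qed.

Definition ee (k : nat) : R := / (INR k + 1).

Lemma ee_pos k : 0 < ee k.
Proof. rewrite /ee; apply Rinv_0_lt_compat; have := pos_INR k; lra. Qed.
Lemma ee_le1 k : ee k <= 1.
Proof. rewrite /ee -{2}Rinv_1; apply Rinv_le_contravar; [lra|]; have := pos_INR k; lra. Qed.
Lemma ee_mono k m : (k <= m)%coq_nat -> ee m <= ee k.
Proof. move=> H; rewrite /ee; apply Rinv_le_contravar; [have := pos_INR k; lra|]; have := le_INR _ _ H; lra. Qed.
Lemma ee_small a : 0 < a -> exists k, ee k < a.
Proof.
move=> Ha. have [N [H1 H2]] := archimed_cor1 a Ha. exists N.
have HN : 0 < INR N by apply lt_0_INR.
apply: Rle_lt_trans H1. rewrite /ee. apply Rinv_le_contravar; lra.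
Qed.

Lemma cv_const (c : R) : Un_cv (fun _ => c) c.
Proof. move=> eps He; exists 0%nat => m _; rewrite /Rdist Rminus_diag Rabs_R0; lra. Qed.

Lemma cv_sum n (F : nat -> 'I_n -> R) (l : 'I_n -> R) :
  (forall i, Un_cv (fun m => F m i) (l i)) ->
  Un_cv (fun m => \big[Rplus/0]_(i < n) F m i) (\big[Rplus/0]_(i < n) l i).
Proof.
elim: n F l => [|n IH] F l H.
  have -> : (fun m => \big[Rplus/0]_(i < 0) F m i) = fun _ => 0.
    apply functional_extensionality => m; apply big_ord0.
  rewrite big_ord0; apply cv_const.
have -> : (fun m => \big[Rplus/0]_(i < n.+1) F m i) =
   fun m => \big[Rplus/0]_(i < n) F m (widen_ord (leqnSn n) i) + F m ord_max.
  apply functional_extensionality => m; apply big_ord_recr.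
rewrite big_ord_recr. apply CV_plus; last by apply H.
apply (IH (fun m i => F m (widen_ord (leqnSn n) i))) => i; apply H.
Qed.

Lemma cv_le (u : nat -> R) l b k : Un_cv u l -> (forall m, (k <= m)%coq_nat -> u m <= b) -> l <= b.
Proof.
move=> Hu Hb. case: (Rle_or_lt l b) => // Hlt. exfalso.
have [N HN] := Hu (l - b) ltac:(lra).
have H1 := HN (Nat.max N k) (Nat.le_max_l _ _).
have H2 := Hb (Nat.max N k) (Nat.le_max_r _ _).
rewrite /Rdist in H1. have := Rle_abs (- (u (Nat.max N k) - l)). rewrite Rabs_Ropp. lra.
Qed.

Lemma coord_le n (v : vec n) i : v i * v i <= dot v v.
Proof. rewrite /dot. have H := @sum_term n (fun j => v j * v j) i. apply H => j; nra. Qed.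

Lemma proj_exists n (S : vec n -> Prop) (x : vec n) :
  (exists y, S y) -> closed_vset S -> convex_vset S -> exists p, is_proj S x p.
Proof.
move=> [y0 Hy0] Hcl Hcv.
set E := fun r => exists y, S y /\ r = - vnorm (vsub x y).
have Hb : bound E.
  exists 0 => r [y [_ ->]]; have := vnorm_ge0 (vsub x y); lra.
have Hne : exists r, E r by exists (- vnorm (vsub x y0)), y0.
case: (completeness E Hb Hne) => m0 [Hub Hlub].
set delta := - m0.
have Hlow : forall y, S y -> delta <= vnorm (vsub x y).
  move=> y Hy. have := Hub _ (ex_intro _ y (conj Hy erefl)). rewrite /delta; lra.
have Hd0 : 0 <= delta.
  have : m0 <= 0. apply Hlub => r [y [_ ->]]; have := vnorm_ge0 (vsub x y); lra.
  rewrite /delta; lra.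
have Happ : forall eps, 0 < eps -> exists y, S y /\ vnorm (vsub x y) < delta + eps.
  move=> eps He. apply NNPP => Hno.
  have : m0 <= m0 - eps.
    apply Hlub => r [y [Hy ->]].
    case: (Rle_or_lt (delta + eps) (vnorm (vsub x y))) => Hc.
    - rewrite /delta in Hc; lra.
    - exfalso; apply Hno; exists y; split => //.
  lra.
have Hk : forall k, exists y, S y /\ vnorm (vsub x y) < delta + ee k.
  move=> k; apply Happ, ee_pos.
set ys := fun k => proj1_sig (constructive_indefinite_description _ (Hk k)).
have Hys : forall k, S (ys k) /\ vnorm (vsub x (ys k)) < delta + ee k.
  move=> k; exact: (proj2_sig (constructive_indefinite_description _ (Hk k))).
clearbody ys.
set c := 2 * delta + 1.
have Hc : 1 <= c by rewrite /c; lra.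
have Hsq : forall k, dot (vsub x (ys k)) (vsub x (ys k)) <= delta * delta + c * ee k.
  move=> k. case: (Hys k) => _ H. rewrite -vnorm_sq.
  have := vnorm_ge0 (vsub x (ys k)). have := ee_pos k. have := ee_le1 k.
  rewrite /c; nra.
have Hcau : forall k m, dot (vsub (ys k) (ys m)) (vsub (ys k) (ys m)) <= 2 * c * (ee k + ee m).
  move=> k m.
  have Hmid : S (seg (1/2) (ys k) (ys m)).
    apply Hcv; [apply Hys|apply Hys|lra].
  have H1 := Hlow _ Hmid.
  have H2 : delta * delta <= dot (vsub x (seg (1/2) (ys k) (ys m))) (vsub x (seg (1/2) (ys k) (ys m))).
    rewrite -vnorm_sq. nra.
  set a := vsub x (ys k). set b := vsub x (ys m).
  have E1 : vsub (ys k) (ys m) = vsub b a.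
    apply functional_extensionality => i; rewrite /a /b /vsub; ring.
  have E2 : vsub x (seg (1/2) (ys k) (ys m)) = vscale (1/2) (vadd a b).
    apply functional_extensionality => i; unfold a, b, seg, vsub, vadd, vscale; field.
  rewrite E2 in H2. rewrite E1.
  have Ha := Hsq k. have Hb' := Hsq m. rewrite -/a in Ha. rewrite -/b in Hb'.
  clearbody a b.
  rewrite !dot_scalel !dot_scaler !dot_addl !dot_addr in H2.
  rewrite !dot_subl !dot_subr. rewrite (dot_sym a b) in H2 *.
  nra.
have Hcc : forall i, Cauchy_crit (fun k => ys k i).
  move=> i eps He.
  have [K HK] := @ee_small (eps * eps / (4 * c)) ltac:(apply Rdiv_lt_0_compat; nra).
  exists K => p q Hp Hq.
  have H1 := coord_le (vsub (ys p) (ys q)) i.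
  have H2 := Hcau p q.
  have H3 := ee_mono Hp. have H4 := ee_mono Hq.
  have H5 : 4 * c * ee K < eps * eps.
    have -> : eps * eps = 4 * c * (eps * eps / (4 * c)) by field; lra.
    apply Rmult_lt_compat_l => //; lra.
  rewrite /Rdist. change (vsub (ys p) (ys q) i) with (ys p i - ys q i) in H1.
  set a := ys p i - ys q i in H1 *.
  have Habs : Rabs a * Rabs a = a * a.
    rewrite -Rabs_mult Rabs_pos_eq //; nra.
  have := Rabs_pos a. have := ee_pos p. have := ee_pos q. nra.
set z : vec n := fun i => proj1_sig (R_complete _ (Hcc i)).
have Hz : forall i, Un_cv (fun k => ys k i) (z i).
  move=> i; exact: (proj2_sig (R_complete _ (Hcc i))).
clearbody z.
have Hzk : forall k, dot (vsub z (ys k)) (vsub z (ys k)) <= 4 * c * ee k.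
  move=> k.
  have Hl := cv_sum (F := fun m i => (ys m i - ys k i) * (ys m i - ys k i))
                    (l := fun i => (z i - ys k i) * (z i - ys k i))
                    (fun i => CV_mult _ _ _ _ (CV_minus _ _ _ _ (Hz i) (cv_const (ys k i)))
                                              (CV_minus _ _ _ _ (Hz i) (cv_const (ys k i)))).
  apply: (@cv_le _ _ _ k Hl) => m Hm.
  have := Hcau m k. have := ee_mono Hm.
  change (\big[Rplus/0]_(i < n) ((ys m i - ys k i) * (ys m i - ys k i))) with (dot (vsub (ys m) (ys k)) (vsub (ys m) (ys k))).
  move=> H1 H2. nra.
have Hsmall : forall eps, 0 < eps -> exists k, vnorm (vsub z (ys k)) < eps.
  move=> eps He.
  have [K HK] := @ee_small (eps * eps / (4 * c)) ltac:(apply Rdiv_lt_0_compat; nra).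
  exists K. apply vnorm_lt; first lra.
  have H5 : 4 * c * ee K < eps * eps.
    have -> : eps * eps = 4 * c * (eps * eps / (4 * c)) by field; lra.
    apply Rmult_lt_compat_l => //; lra.
  have := Hzk K. lra.
have HSz : S z.
  apply Hcl => eps He. have [k Hk'] := Hsmall eps He. exists (ys k); split => //; apply Hys.
exists z; split => // y Hy.
suff : vnorm (vsub x z) <= delta by have := Hlow y Hy; lra.
case: (Rle_or_lt (vnorm (vsub x z)) delta) => // Hlt. exfalso.
set eta := vnorm (vsub x z) - delta.
have Hpos : 0 < Rmin (eta / 2) ((eta / 2) * (eta / 2) / (4 * c)).
  apply Rmin_glb_lt; [rewrite /eta; lra| apply Rdiv_lt_0_compat; rewrite /eta; nra].
have [k Hk1] := ee_small Hpos.
have Hk2 := Rle_lt_trans _ _ _ (Rle_refl _) (Rlt_le_trans _ _ _ Hk1 (Rmin_l _ _)).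
have Hk3 := Rlt_le_trans _ _ _ Hk1 (Rmin_r _ _).
have H1 := vnorm_tri x (ys k) z.
case: (Hys k) => _ H3.
have H4 : vnorm (vsub (ys k) z) < eta / 2.
  rewrite vnorm_sub_sym.
  apply vnorm_lt; first (rewrite /eta; lra).
  have H5 : 4 * c * ee k < eta / 2 * (eta / 2).
    have -> : eta / 2 * (eta / 2) = 4 * c * (eta / 2 * (eta / 2) / (4 * c)) by field; lra.
    apply Rmult_lt_compat_l => //; lra.
  have := Hzk k. lra.
rewrite /eta in Hk2 H4. lra.
Qed.

Lemma final_alg (L k a b d : R) :
  0 < L -> 0 < k -> 0 <= a -> 0 <= b -> 0 <= d -> d <= a + b ->
  k / 2 * (b * b) <= L * a * b + L / 2 * (a * a) ->
  L * a >= k / (1 + k / L + sqrt (1 + k / L)) * d.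
Proof.
move=> HL Hk Ha Hb Hd Hdab Hq.
set mu := k / L.
have Hmu : mu * L = k by rewrite /mu; field; lra.
have Hmu0 : 0 < mu by rewrite /mu; apply Rdiv_lt_0_compat.
set s := sqrt (1 + mu).
have Hs0 : 0 <= s by apply sqrt_pos.
have Hss : s * s = 1 + mu by rewrite /s sqrt_sqrt; lra.
have key : k * b <= L * a * (1 + s).
  case: (Rle_or_lt (k * b) (L * a * (1 + s))) => // H. exfalso.
  have H1 : L * a * s < k * b - L * a by lra.
  have H2 : 0 <= L * a * s by apply Rmult_le_pos; [apply Rmult_le_pos; lra|].
  have H3 : (L * a * s) * (L * a * s) < (k * b - L * a) * (k * b - L * a).
    apply Rmult_le_0_lt_compat => //.
  have H4 : (L * a * s) * (L * a * s) = L * L * a * a + k * L * a * a.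
    have -> : (L * a * s) * (L * a * s) = L * L * a * a * (s * s) by ring.
    rewrite Hss -Hmu; ring.
  rewrite H4 in H3.
  have H5 : k * (k * (b * b) - 2 * L * a * b - L * (a * a)) > 0 by nra.
  have H6 : k * (b * b) - 2 * L * a * b - L * (a * a) > 0.
    case: (Rle_or_lt (k * (b * b) - 2 * L * a * b - L * (a * a)) 0) => // H7. nra.
  lra.
have HD : 0 < 1 + mu + s by lra.
have H1 : k * d <= L * a * (1 + mu + s).
  have : k * d <= k * (a + b) by apply Rmult_le_compat_l; lra.
  have : L * a * mu = k * a by rewrite -Hmu; ring.
  nra.
apply Rle_ge.
have -> : k / (1 + mu + s) * d = (k * d) / (1 + mu + s) by field; lra.
apply (Rmult_le_reg_r (1 + mu + s)) => //.
have -> : k * d / (1 + mu + s) * (1 + mu + s) = k * d by field; lra.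
lra.
Qed.

Unset Implicit Arguments.

Theorem theorem7 (n : nat) (X : vec n -> Prop) (f : vec n -> R)
  (grad : vec n -> vec n) (Lf kappa fstar : R) :
  (* standing setting *)
  (exists x0 : vec n, X x0) -> closed_vset X -> convex_vset X ->
  convex_on X f ->
  (forall x : vec n, X x -> has_gradient f x (grad x)) ->
  continuous_on_vec X grad ->
  0 < Lf -> lipschitz_on_vec X grad Lf ->
  (* f* = min_{x in X} f x, attained (X* nonempty) *)
  (forall x : vec n, X x -> fstar <= f x) ->
  (exists xs : vec n, optset X f fstar xs) ->
  closed_vset (optset X f fstar) ->
  (* quadratic functional growth *)
  0 < kappa ->
  (forall x xbar : vec n, X x -> is_proj (optset X f fstar) x xbar ->
     f x - fstar >= kappa / 2 * (vnorm (vsub x xbar))^2) ->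
  (* global error bound, with mu_f = kappa / Lf *)
  forall x xplus xbar : vec n, X x ->
    is_proj X (vsub x (vscale (/ Lf) (grad x))) xplus ->
    is_proj (optset X f fstar) x xbar ->
    vnorm (vscale Lf (vsub x xplus)) >=
      kappa / (1 + kappa / Lf + sqrt (1 + kappa / Lf)) * vnorm (vsub x xbar).
Proof.
move=> Hne HclX Hcv Hconv Hg Hcont HL Hlip Hmin Hxs Hcl Hk HQG x xp xb Hx Hxp Hxb.
have HcvS : convex_vset (optset X f fstar).
  move=> a b t [Ha Hfa] [Hb Hfb] Ht. split; first by apply Hcv.
  apply Rle_antisym.
  - have := Hconv a b t Ha Hb Ht. rewrite Hfa Hfb. move=> H. apply: Rle_trans H _. apply Req_le; ring.
  - apply Hmin; apply Hcv => //.
have [p Hp] := proj_exists xp Hxs Hcl HcvS.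
have [[HpX Hfp] _] := Hp.
have HxpX : X xp by case: Hxp.
have HQ := HQG xp p HxpX Hp.
have Hdesc := descent Hcv Hconv Hg HL Hlip Hx HxpX.
have Hgi := grad_ineq Hconv (Hg x Hx) Hx HpX.
have Hvi := proj_vi Hcv Hxp HpX.
set g := grad x in Hdesc Hgi Hvi.
set u := vsub x xp. set w := vsub xp p.
have E1 : vsub xp x = vscale (-1) u.
  apply functional_extensionality => i; rewrite /u /vsub /vscale; ring.
have E2 : vsub p x = vscale (-1) (vadd u w).
  apply functional_extensionality => i; rewrite /u /w /vsub /vadd /vscale; ring.
have E3 : vsub (vsub x (vscale (/ Lf) g)) xp = vsub u (vscale (/ Lf) g).
  apply functional_extensionality => i; rewrite /u /vsub /vscale; ring.
have E4 : vsub p xp = vscale (-1) w.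
  apply functional_extensionality => i; rewrite /w /vsub /vscale; ring.
rewrite E1 in Hdesc. rewrite E2 in Hgi. rewrite E3 E4 in Hvi.
have Hxb2 := (proj2 Hxb) p (conj HpX Hfp).
have Htri := vnorm_tri x xp p.
rewrite -/u -/w in Htri.
rewrite -/w in HQ.
clearbody u w.
rewrite !dot_scalel !dot_scaler in Hdesc.
rewrite !dot_scaler dot_addr in Hgi.
rewrite !dot_subl !dot_scalel !dot_scaler in Hvi.
have Hvi2 : dot g w <= Lf * dot u w.
  rewrite (dot_sym g w) in Hvi.
  have : / Lf * dot w g <= dot u w by lra.
  move=> H. rewrite dot_sym.
  have -> : dot w g = Lf * (/ Lf * dot w g) by field; lra.
  apply Rmult_le_compat_l; lra.
have HCS := CS u w.
have Hsq : vnorm u * vnorm u = dot u u by apply vnorm_sq.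
have Hfx : f xp - fstar <= Lf * (vnorm u * vnorm w) + Lf / 2 * (vnorm u * vnorm u).
  rewrite Hsq. have : Lf * dot u w <= Lf * (vnorm u * vnorm w) by apply Rmult_le_compat_l; lra.
  rewrite Hfp in Hgi. lra.
rewrite vnorm_scale; last lra. rewrite -/u.
apply: (final_alg HL Hk (vnorm_ge0 u) (vnorm_ge0 w) (vnorm_ge0 _)); first lra.
rewrite /= Rmult_1_r in HQ. lra.
Qed.
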